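(* If $P\in\{0,1\}^{k\times\ell}$ is a pattern with (at most) two nonempty rows, more precisely with exactly two nonempty rows, then $P$ is row-bounding, i.e., $\mathrm{Av}(P)$ is row-bounded.
   Context: All matrices are binary; rows numbered top to bottom, columns left to right; a row is nonempty if it contains a 1-entry. $(a,b]=\{a+1,\dots,b\}$. A pattern $P\in\{0,1\}^{k\times\ell}$ is an interval minor of $M\in\{0,1\}^{m\times n}$ if there are integers $0=r_0<\dots<r_k=m$ and $0=c_0<\dots<c_\ell=n$ such that for each 1-entry $(i,j)$ of $P$ the submatrix of $M$ on rows $(r_{i-1},r_i]$ and columns $(c_{j-1},c_j]$ contains a 1-entry; otherwise $M$ avoids $P$. $\mathrm{Av}(P)$ is the set of binary matrices avoiding $P$. $M\in\mathrm{Av}(P)$ is critical if changing any single 0-entry of $M$ to a 1-entry produces a matrix containing $P$. A horizontal 0-run is a maximal set of consecutive 0-entries within one row; the complexity of a row is the number of such runs in it. $\mathrm{Av}(P)$ is row-bounded (and $P$ row-bounding) if there is a constant bounding the complexity of every row of every critical matrix in $\mathrm{Av}(P)$. *)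

(* Defs.v *)
From mathcomp Require Import all_boot all_algebra.
Set Implicit Arguments. Unset Strict Implicit. Unset Printing Implicit Defensive.

(* r : nat -> nat encodes 0 = r_0 < r_1 < ... < r_k = m.
   Row block i (0-indexed, i < k) is {a | r i <= a < r (i+1)}, i.e. the paper's
   (r_{i-1}, r_i] shifted to 0-indexing. *)
Definition cut_seq (r : nat -> nat) (k m : nat) : Prop :=
  r 0 = 0 /\ r k = m /\ (forall i, i < k -> r i < r i.+1).

Definition contains (k l m n : nat) (P : 'M[bool]_(k, l)) (M : 'M[bool]_(m, n)) : Prop :=
  exists r c : nat -> nat, cut_seq r k m /\ cut_seq c l n /\
    forall (i : 'I_k) (j : 'I_l), P i j ->
      exists (a : 'I_m) (b : 'I_n),
        [/\ r i <= a < r i.+1, c j <= b < c j.+1 & M a b].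

Definition avoids (k l m n : nat) (P : 'M[bool]_(k, l)) (M : 'M[bool]_(m, n)) : Prop :=
  ~ contains P M.

Definition set_one (m n : nat) (M : 'M[bool]_(m, n)) (a : 'I_m) (b : 'I_n) : 'M[bool]_(m, n) :=
  \matrix_(i, j) (M i j || ((i == a) && (j == b))).

Definition critical (k l m n : nat) (P : 'M[bool]_(k, l)) (M : 'M[bool]_(m, n)) : Prop :=
  avoids P M /\
  forall (a : 'I_m) (b : 'I_n), M a b = false -> contains P (set_one M a b).

(* Number of horizontal 0-runs in row a: count the 0-entries that start a run,
   i.e. 0-entries whose left neighbour (if any) is a 1-entry. *)
Definition row_complexity (m n : nat) (M : 'M[bool]_(m, n)) (a : 'I_m) : nat :=
  #|[set b : 'I_n | ~~ M a b && [forall b' : 'I_n, (b'.+1 == b :> nat) ==> M a b']]|.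

Definition row_bounding (k l : nat) (P : 'M[bool]_(k, l)) : Prop :=
  exists C : nat, forall (m n : nat) (M : 'M[bool]_(m, n)),
    critical P M -> forall a : 'I_m, row_complexity M a <= C.

Definition nonempty_row (k l : nat) (P : 'M[bool]_(k, l)) (i : 'I_k) : bool :=
  [exists j : 'I_l, P i j].

(* Main.v *)
Require Import Defs.
From mathcomp Require Import all_boot all_algebra.
From mathcomp Require Import zify.
Set Implicit Arguments. Unset Strict Implicit. Unset Printing Implicit Defensive.

Definition Phi (s t : nat -> bool) (l n : nat) (X Y : nat -> bool) : Prop :=
  exists x y : nat -> nat,
    (forall j, j < l -> [/\ x j < n, y j < n, s j ==> X (x j) & t j ==> Y (y j)]) /\
    (forall j, j.+1 < l -> maxn (x j) (y j) < minn (x j.+1) (y j.+1)).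

Lemma Phi_mono s t l n (X Y X' Y' : nat -> bool) :
  (forall c, X c -> X' c) -> (forall c, Y c -> Y' c) ->
  Phi s t l n X Y -> Phi s t l n X' Y'.
Proof.
move=> HX HY [x [y [H1 H2]]]; exists x, y; split=> // j /H1 [-> -> Hs Ht]; split=> //.
  by apply/implyP=> /(implyP Hs) /HX.
by apply/implyP=> /(implyP Ht) /HY.
Qed.

Lemma Phi_swap s t l n X Y : Phi s t l n X Y -> Phi t s l n Y X.
Proof.
move=> [x [y [H1 H2]]]; exists y, x; split.
  by move=> j /H1 [-> -> Hs Ht].
by move=> j /H2; rewrite maxnC minnC.
Qed.

Definition rho (O : nat -> bool) c := count O (iota 0 c).
Definition eO (O : nat -> bool) n := filter O (iota 0 n).

Lemma size_eO (O : nat -> bool) n : size (eO O n) = rho O n.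
Proof. by rewrite /eO size_filter. Qed.

Lemma eO_prop (O : nat -> bool) n i : i < size (eO O n) -> O (nth 0 (eO O n) i) && (nth 0 (eO O n) i < n).
Proof.
move=> /(mem_nth 0); rewrite mem_filter mem_iota add0n => /andP [-> /andP [_ ->]] //.
Qed.

Lemma eO_lt (O : nat -> bool) n c i : c <= n -> i < size (eO O n) ->
  (nth 0 (eO O n) i < c) = (i < rho O c).
Proof.
move=> cn isz.
have E : iota 0 n = iota 0 c ++ iota c (n - c) by rewrite -{1}(subnKC cn) iotaD.
move: isz; rewrite /eO E filter_cat nth_cat size_filter -/(rho O c) size_cat size_filter => isz.
case: ifP => ic.
  have : nth 0 [seq x <- iota 0 c | O x] i \in [seq x <- iota 0 c | O x].
    by apply: mem_nth; rewrite size_filter.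
  by rewrite mem_filter mem_iota add0n => /andP [_ /andP [_ ->]].
have : nth 0 [seq x <- iota c (n - c) | O x] (i - rho O c) \in [seq x <- iota c (n - c) | O x].
  apply: mem_nth; rewrite size_filter; move/negbT: ic; rewrite -leqNgt => ic.
  by rewrite ltn_subLR //; move: isz; rewrite size_filter.
rewrite mem_filter mem_iota => /andP [_ /andP [H _]]; by rewrite ltnNge H.
Qed.

Lemma eO_incr (O : nat -> bool) n i j : i < j -> j < size (eO O n) -> nth 0 (eO O n) i < nth 0 (eO O n) j.
Proof.
move=> ij jn; apply: (sorted_ltn_nth ltn_trans) => //.
- by rewrite /eO; apply: sorted_filter; [exact: ltn_trans | exact: iota_ltn_sorted].
- by rewrite inE; apply: ltn_trans jn.
Qed.

Lemma rho_mono (O : nat -> bool) c1 c2 : c1 <= c2 -> rho O c1 <= rho O c2.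
Proof.
by move=> h; rewrite /rho -(subnKC h) iotaD count_cat leq_addr.
Qed.

Lemma rho_lt (O : nat -> bool) c1 c2 o : c1 <= o < c2 -> O o -> rho O c1 < rho O c2.
Proof.
move=> /andP [h1 h2] Oo; rewrite /rho -(subnKC (ltnW (leq_ltn_trans h1 h2))) iotaD count_cat.
rewrite -ltn_subLR ?leqnn // subnn -has_count; apply/hasP; exists o => //.
by rewrite mem_iota add0n subnKC ?h1 ?h2 // (ltnW (leq_ltn_trans h1 h2)).
Qed.

Lemma rhoS (O : nat -> bool) c : rho O c.+1 <= (rho O c).+1.
Proof.
rewrite /rho -addn1 iotaD count_cat /= addn0 add0n -addn1 leq_add2l; by case: (O c).
Qed.

Lemma rhoS_notO (O : nat -> bool) c : ~~ O c -> rho O c.+1 = rho O c.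
Proof.
by move=> h; rewrite /rho -addn1 iotaD count_cat /= add0n (negbTE h) /= !addn0.
Qed.

Lemma rho_le_n (O : nat -> bool) n c : (forall v, O v -> v < n) -> rho O c <= rho O n.
Proof.
move=> Hn; case: (leqP c n) => [/rho_mono //|/ltnW h].
rewrite /rho -(subnKC h) iotaD count_cat add0n.
rewrite (@eq_in_count _ _ pred0 (iota n (c - n))) ?count_pred0 ?addn0 //.
move=> v; rewrite mem_iota => /andP [h1 _] /=; apply/negP => /Hn; lia.
Qed.

Lemma confine s t l n (O Y : nat -> bool) : (forall v, O v -> v < n) -> ~ Phi s t l n O Y ->
  size (undup [seq rho O y.+1 | y <- iota 0 n & Y y]) < 2 * l.
Proof.
move=> On HnP; rewrite ltnNge; apply/negP => Hsz; apply: HnP.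
set V := undup _ in Hsz.
set S := sort leq V.
have Ssz : size S = size V by rewrite size_sort.
have Sso : sorted ltn S.
  by rewrite ltn_sorted_uniq_leq sort_uniq undup_uniq sort_sorted //; exact: leq_total.
have SV : forall v, v \in S -> exists y, [/\ y < n, Y y & rho O y.+1 = v].
  move=> v; rewrite mem_sort mem_undup => /mapP [y]; rewrite mem_filter mem_iota add0n => /andP [Yy /andP [_ yn]] ->.
  by exists y.
have Sinc : forall i j, i < j -> j < size S -> nth 0 S i < nth 0 S j.
  move=> i j ij jS; apply: (sorted_ltn_nth ltn_trans) => //; rewrite inE //; exact: ltn_trans jS.
pose yf j := nth 0 [seq y <- iota 0 n | Y y && (rho O y.+1 == nth 0 S j.*2)] 0.
have Hy : forall j, j < l -> [/\ yf j < n, Y (yf j) & rho O (yf j).+1 = nth 0 S j.*2].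
  move=> j jl.
  have : nth 0 S j.*2 \in S by apply: mem_nth; rewrite Ssz; apply: leq_trans Hsz; lia.
  move=> /SV [y [yn Yy ry]].
  have : yf j \in [seq y <- iota 0 n | Y y && (rho O y.+1 == nth 0 S j.*2)].
    apply: mem_nth; rewrite size_filter -has_count; apply/hasP; exists y.
      by rewrite mem_iota add0n yn.
    by rewrite /= Yy ry eqxx.
  by rewrite mem_filter mem_iota add0n => /andP [/andP [-> /eqP ->] /andP [_ ->]].
have Hv : forall j, j < l -> nth 0 S j.*2 < rho O n.
  move=> j jl.
  have j1S : j.*2.+1 < size S by rewrite Ssz; apply: leq_trans Hsz; lia.
  have : nth 0 S j.*2.+1 \in S by apply: mem_nth.
  move=> /SV [y [yn Yy ry]].
  apply: (leq_trans (Sinc _ _ (ltnSn _) j1S)); rewrite -ry; exact: rho_le_n.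
pose xf j := nth 0 (eO O n) (nth 0 S j.*2).
exists xf, yf; split.
  move=> j jl; have [yn Yy ry] := Hy j jl.
  have := Hv j jl; rewrite -size_eO => /eO_prop /andP [Ox xn].
  by rewrite /xf xn Ox Yy !implybT.
move=> j jl.
have jl' : j < l by apply: ltn_trans jl.
have [yn Yy ry] := Hy j jl'.
have [yn' Yy' ry'] := Hy j.+1 jl.
have vsz : nth 0 S j.*2 < size (eO O n) by rewrite size_eO; exact: Hv.
have v'sz : nth 0 S (j.+1).*2 < size (eO O n) by rewrite size_eO; exact: Hv.
have yx : yf j < xf j.
  have := eO_lt yn vsz; rewrite ry ltnn => /negbT; rewrite -leqNgt //.
have yx' : yf j.+1 < xf j.+1.
  have := eO_lt yn' v'sz; rewrite ry' ltnn => /negbT; rewrite -leqNgt //.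
have xy' : xf j < yf j.+1.
  rewrite /xf eO_lt //; last exact: ltnW.
  have h1 : nth 0 S j.*2.+1 < nth 0 S (j.+1).*2.
    apply: Sinc; first by rewrite doubleS.
    by rewrite Ssz; apply: leq_trans Hsz; lia.
  have h2 : nth 0 S j.*2 < nth 0 S j.*2.+1.
    by apply: Sinc => //; rewrite Ssz; apply: leq_trans Hsz; lia.
  have := rhoS O (yf j.+1); rewrite ry'; lia.
rewrite (maxn_idPl (ltnW yx)) (minn_idPr (ltnW yx')); exact: xy'.
Qed.

Lemma region s t l n (O X Y : nat -> bool) b :
  (forall c, O c -> c < n) -> (forall c, O c -> X c) -> ~~ O b -> b < n ->
  Phi s t l n (fun c => X c || (c == b)) Y -> ~ Phi s t l n X Y ->
  exists2 beta, (beta == 0) || has (fun y => Y y && (beta == rho O y.+1)) (iota 0 n)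
    & beta <= rho O b < beta + l.
Proof.
move=> On OX Ob bn [x [y [H1 H2]]] HnP.
have l0 : 0 < l.
  case: l H1 H2 HnP => // _ _ HnP; exfalso; apply: HnP; exists x, y; split=> //.
case: (boolP [exists j : 'I_l, t j && (y j == b)]) => [/existsP [j /andP [tj /eqP yjb]] | Hnb].
  exists (rho O b.+1).
    apply/orP; right; apply/hasP; exists b; first by rewrite mem_iota add0n bn.
    have [_ _ _ Ht] := H1 j (ltn_ord j).
    by rewrite /= -yjb (implyP Ht tj) eqxx.
  by rewrite rhoS_notO // leqnn /= -[X in X < _]addn0 ltn_add2l.
have ynb : forall j, j < l -> t j -> y j != b.
  move=> j jl tj; apply/negP => /eqP e; move/existsP: Hnb; apply.
  by exists (Ordinal jl); rewrite /= tj e eqxx.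
pose lo := \max_(j < l | t j && (y j < b)) (y j).+1.
have lob : lo <= b by apply/bigmax_leqP => j /andP [_].
have ylo : forall j, j < l -> t j -> y j < b -> y j < lo.
  move=> j jl tj yb; exact: (@leq_bigmax_cond _ (fun j : 'I_l => t j && (y j < b)) (fun j : 'I_l => (y j).+1) (Ordinal jl) (introT andP (conj tj yb))).
exists (rho O lo).
  case: (pickP (fun j : 'I_l => t j && (y j < b))) => [j0 Hj0 | Hnone].
    have : 0 < #|(fun j : 'I_l => t j && (y j < b))|.
      by apply/card_gt0P; exists j0.
    move=> /(eq_bigmax_cond (fun j : 'I_l => (y j).+1)) [i0 Hi0 Ei0].
    apply/orP; right; apply/hasP; exists (y i0).
      by have [_ yn _ _] := H1 i0 (ltn_ord i0); rewrite mem_iota add0n yn.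
    move: Hi0; rewrite unfold_in => /andP [ti0 _].
    have [_ _ _ Ht] := H1 i0 (ltn_ord i0).
    by rewrite (implyP Ht ti0) /= /lo Ei0 eqxx.
  by rewrite /lo big_pred0 // /rho.
rewrite rho_mono //=.
rewrite ltnNge; apply/negP => Hc; apply: HnP.
pose L0 := rho O lo.
pose e i := nth 0 (eO O n) i.
have He : forall j, j < l -> [/\ O (e (L0 + j)), e (L0 + j) < n, lo <= e (L0 + j) & e (L0 + j) < b].
  move=> j jl.
  have jsz : L0 + j < size (eO O n).
    rewrite size_eO; apply: (leq_trans _ (rho_mono O (ltnW bn))); apply: leq_trans Hc.
    by rewrite ltn_add2l.
  have /andP [Oe en] := eO_prop jsz.
  split=> //.
    by rewrite leqNgt (eO_lt (leq_trans lob (ltnW bn)) jsz) -leqNgt leq_addr.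
  rewrite (eO_lt (ltnW bn) jsz); apply: leq_trans Hc; by rewrite ltn_add2l.
have Heinc : forall j, j.+1 < l -> e (L0 + j) < e (L0 + j.+1).
  move=> j jl; apply: eO_incr; first by rewrite ltn_add2l.
  rewrite size_eO; apply: (leq_trans _ (rho_mono O (ltnW bn))); apply: leq_trans Hc.
  by rewrite ltn_add2l.
pose f j v := if (lo <= v) && (v <= b) then e (L0 + j) else v.
have fkey : forall j u w, j.+1 < l -> u < w -> f j u < f j.+1 w.
  move=> j u w jl uw.
  have [_ _ lo1 b1] := He j (ltn_trans (ltnSn j) jl).
  have [_ _ lo2 b2] := He j.+1 jl.
  have := Heinc j jl.
  rewrite /f; case: ifP => /andP; case: ifP => /andP; lia.
exists (fun j => f j (x j)), (fun j => f j (y j)); split.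
  move=> j jl.
  have [xn yn Hs Ht] := H1 j jl.
  have [Oe en _ _] := He j jl.
  split.
  - by rewrite /f; case: ifP.
  - by rewrite /f; case: ifP.
  - apply/implyP => sj; rewrite /f; case: ifP => [_|/negbT hx]; first exact: OX.
    move: (implyP Hs sj) => /orP [//|/eqP xb].
    by move: hx; rewrite xb lob leqnn.
  - apply/implyP => tj; rewrite /f; case: ifP => [/andP [h1 h2]|_]; last exact: (implyP Ht tj).
    have := ynb j jl tj; case: (ltngtP (y j) b) => // [yb|yb] _.
      by have := ylo j jl tj yb; lia.
    lia.
move=> j jl.
have := H2 j jl => Hm.
have h1 := fkey j (x j) (x j.+1) jl.
have h2 := fkey j (x j) (y j.+1) jl.
have h3 := fkey j (y j) (x j.+1) jl.
have h4 := fkey j (y j) (y j.+1) jl.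
have a1 : x j < x j.+1 by lia.
have a2 : x j < y j.+1 by lia.
have a3 : y j < x j.+1 by lia.
have a4 : y j < y j.+1 by lia.
move: (h1 a1) (h2 a2) (h3 a3) (h4 a4); lia.
Qed.

Definition Xr m n (M : 'M[bool]_(m,n)) (lo hi : nat) : nat -> bool :=
  fun c => [exists i : 'I_m, exists j : 'I_n, [&& lo <= i, i < hi, (j == c :> nat) & M i j]].

Definition Orow m n (M : 'M[bool]_(m,n)) (a : 'I_m) : nat -> bool :=
  fun c => [exists j : 'I_n, (j == c :> nat) && M a j].

Definition prow k l (P : 'M[bool]_(k,l)) (i : 'I_k) : nat -> bool :=
  fun j => [exists j' : 'I_l, (j' == j :> nat) && P i j'].

Lemma cut_mono r k m : cut_seq r k m -> forall i j, i <= j -> j <= k -> r i + (j - i) <= r j.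
Proof.
move=> [_ [_ Hinc]] i; elim=> [|j IH].
  by rewrite leqn0 => /eqP -> _; rewrite addn0.
rewrite leq_eqVlt => /orP [/eqP -> _|]; first by rewrite subnn addn0.
rewrite ltnS => ij jk.
have := IH ij (ltnW jk); have := Hinc j jk; lia.
Qed.

Lemma cut_le r k m : cut_seq r k m -> forall j, j <= k -> r j <= m.
Proof.
move=> H j jk; have := cut_mono H jk (leqnn k); case: H => [_ [-> _]]; lia.
Qed.

Lemma cut_ge r k m : cut_seq r k m -> forall j, j <= k -> j <= r j.
Proof.
move=> H j jk; have := cut_mono H (leq0n j) jk; case: H => [-> _]; lia.
Qed.

Lemma W2C k l m n (P : 'M[bool]_(k,l)) (M : 'M[bool]_(m,n)) (p q : 'I_k) r :
  (forall (i : 'I_k) (j : 'I_l), P i j -> i = p \/ i = q) -> 0 < l ->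
  cut_seq r k m ->
  Phi (prow P p) (prow P q) l n (Xr M (r p) (r p.+1)) (Xr M (r q) (r q.+1)) -> contains P M.
Proof.
move=> Hpq l0 Hr [x [y [H1 H2]]].
pose c j := if j == 0 then 0 else if j < l then (maxn (x j.-1) (y j.-1)).+1 else n.
have Hc1 : forall j, j < l -> c j <= minn (x j) (y j).
  move=> j jl; rewrite /c; case: j jl => [//|j] jl /=.
  by rewrite jl; have := H2 j jl.
have Hc2 : forall j, j < l -> maxn (x j) (y j) < c j.+1.
  move=> j jl; rewrite /c /=; case: ifP => // _.
  by have [xn yn _ _] := H1 j jl; rewrite gtn_max xn yn.
have Hcut : cut_seq c l n.
  split; first by [].
  split; first by rewrite /c ltnn; case: l l0 {Hpq H1 H2 Hc1 Hc2 c P} => //.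
  move=> j jl; have := Hc1 j jl; have := Hc2 j jl; lia.
exists r, c; split=> //; split=> // i j Pij.
have pj : forall i0 : 'I_k, i0 = i -> prow P i0 j.
  by move=> i0 ->; apply/existsP; exists j; rewrite eqxx Pij.
have [xn yn Hs Ht] := H1 j (ltn_ord j).
have h1 := Hc1 j (ltn_ord j); have h2 := Hc2 j (ltn_ord j).
case: (Hpq i j Pij) => ei.
  move: (implyP Hs (pj p (esym ei))) => /existsP [a /existsP [b /and4P [l1 l2 /eqP bx Mab]]].
  exists a, b; rewrite ei l1 l2 Mab; split=> //; apply/andP; rewrite bx; split; lia.
move: (implyP Ht (pj q (esym ei))) => /existsP [a /existsP [b /and4P [l1 l2 /eqP bx Mab]]].
exists a, b; rewrite ei l1 l2 Mab; split=> //; apply/andP; rewrite bx; split; lia.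
Qed.

Lemma C2W k l m n (P : 'M[bool]_(k,l)) (M : 'M[bool]_(m,n)) (p q : 'I_k) r c :
  cut_seq r k m -> cut_seq c l n ->
  (forall (i : 'I_k) (j : 'I_l), P i j ->
      exists (a : 'I_m) (b : 'I_n), [/\ r i <= a < r i.+1, c j <= b < c j.+1 & M a b]) ->
  Phi (prow P p) (prow P q) l n (Xr M (r p) (r p.+1)) (Xr M (r q) (r q.+1)).
Proof.
move=> Hr Hc H.
have Hcj : forall j, j < l -> c j < c j.+1 /\ c j.+1 <= n.
  move=> j jl; split; first by case: Hc => [_ [_ ->]].
  exact: (cut_le Hc jl).
have Hex : forall (i : 'I_k) j, exists v, (j < l) ==> [&& c j <= v, v < c j.+1 &
                                    prow P i j ==> Xr M (r i) (r i.+1) v].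
  move=> i j; case: (ltnP j l) => jl; last by exists 0.
  case: (boolP (prow P i j)) => [/existsP [j' /andP [/eqP ej Pij]]|_].
    have [a [b [Ha Hb Mab]]] := H i j' Pij.
    exists b; rewrite /= -ej; move/andP: Hb => [-> ->] /=; apply/existsP; exists a; apply/existsP; exists b.
    by move/andP: Ha => [-> ->]; rewrite eqxx Mab.
  by exists (c j); rewrite leqnn /=; case: (Hcj j jl) => ->.
pose x j := xchoose (Hex p j).
pose y j := xchoose (Hex q j).
exists x, y; split.
  move=> j jl.
  have := xchooseP (Hex p j)=> /implyP /(_ jl) /and3P [hx1 hx2 hx3].
  have := xchooseP (Hex q j)=> /implyP /(_ jl) /and3P [hy1 hy2 hy3].
  have [_ cn] := Hcj j jl.
  rewrite -/(x j) -/(y j) in hx1 hx2 hx3 hy1 hy2 hy3 *.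
  split=> //; lia.
move=> j jl.
have jl' : j < l by apply: ltn_trans jl.
have := xchooseP (Hex p j)=> /implyP /(_ jl') /and3P [hx1 hx2 _].
have := xchooseP (Hex q j)=> /implyP /(_ jl') /and3P [hy1 hy2 _].
have := xchooseP (Hex p j.+1)=> /implyP /(_ jl) /and3P [hx1' hx2' _].
have := xchooseP (Hex q j.+1)=> /implyP /(_ jl) /and3P [hy1' hy2' _].
rewrite -/(x j) -/(y j) -/(x j.+1) -/(y j.+1) in hx1 hx2 hy1 hy2 hx1' hx2' hy1' hy2' *.
lia.
Qed.

Definition Rf (k m p q T : nat) (i : nat) :=
  if i <= p then i else if i <= q then T + (i - p.+1) else m - (k - i).

Lemma Rf_vals k m p q T : p < q ->
  [/\ Rf k m p q T p = p, Rf k m p q T p.+1 = T, Rf k m p q T q = T + (q - p.+1)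
    & Rf k m p q T q.+1 = m - (k - q.+1)].
Proof.
move=> pq; rewrite /Rf leqnn ltnn pq (leqNgt q p) pq /= leqnn subnn addn0.
rewrite (leqNgt q.+1 p) (ltn_trans pq (ltnSn q)) ltnn; split=> //.
Qed.

Lemma Rf_cut k m p q T : p < q -> q < k -> p < T -> T + (q - p.+1) < m - (k - q.+1) ->
  cut_seq (Rf k m p q T) k m.
Proof.
move=> pq qk pT Tm; split; first by [].
split; first by rewrite /Rf (leqNgt k p) (ltn_trans pq qk) (leqNgt k q) qk subnn subn0.
move=> i ik; rewrite /Rf.
case: ifP => h1; case: ifP => h2; try case: ifP => h3; try case: ifP => h4; lia.
Qed.

Lemma Xr_flip m n (M : 'M[bool]_(m,n)) (a : 'I_m) (b : 'I_n) lo hi v :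
  Xr (set_one M a b) lo hi v -> Xr M lo hi v || ((lo <= a < hi) && (v == b)).
Proof.
move=> /existsP [i /existsP [j /and4P [h1 h2 /eqP hj]]].
rewrite mxE => /orP [Mij|/andP [/eqP ia /eqP jb]].
  by apply/orP; left; apply/existsP; exists i; apply/existsP; exists j; rewrite h1 h2 hj eqxx Mij.
by apply/orP; right; rewrite -ia h1 h2 -hj jb eqxx.
Qed.

Lemma Orow_sub m n (M : 'M[bool]_(m,n)) (a : 'I_m) lo hi c :
  lo <= a < hi -> Orow M a c -> Xr M lo hi c.
Proof.
move=> /andP [h1 h2] /existsP [j /andP [hj Mj]].
by apply/existsP; exists a; apply/existsP; exists j; rewrite h1 h2 hj Mj.
Qed.

Lemma Xr_sub m n (M : 'M[bool]_(m,n)) lo hi lo' hi' c :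
  lo' <= lo -> hi <= hi' -> Xr M lo hi c -> Xr M lo' hi' c.
Proof.
move=> h1 h2 /existsP [i /existsP [j /and4P [g1 g2 g3 g4]]].
apply/existsP; exists i; apply/existsP; exists j; rewrite g3 g4 andbT; apply/andP; split; lia.
Qed.

Lemma core k l (P : 'M[bool]_(k,l)) (p q : 'I_k) : p < q ->
  (forall (i : 'I_k) (j : 'I_l), P i j -> i = p \/ i = q) -> 0 < l ->
  forall m n (M : 'M[bool]_(m,n)), critical P M -> forall a, row_complexity M a <= 4 * l * l.
Proof.
move=> pq Hpq l0 m n M [Hav Hcr] a.
have qk : q < k := ltn_ord q.
pose O := Orow M a.
have On : forall c, O c -> c < n.
  by move=> c /existsP [j /andP [/eqP <- _]].
pose g := q - p.+1.
pose h := k - q.+1.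
pose YA := Xr M (a.+1 + g) (m - h).
pose XB := Xr M p (a - g).
pose validA := (p < a.+1) && (a.+1 + g < m - h).
pose validB := [&& g <= a, p < a - g & a < m - h].
pose VA := undup [seq rho O y.+1 | y <- iota 0 n & YA y].
pose VB := undup [seq rho O y.+1 | y <- iota 0 n & XB y].
pose LA := [seq beta + i | beta <- 0 :: VA, i <- iota 0 l].
pose LB := [seq beta + i | beta <- 0 :: VB, i <- iota 0 l].
pose L := (if validA then LA else [::]) ++ (if validB then LB else [::]).
have noPhi : forall r, cut_seq r k m ->
    ~ Phi (prow P p) (prow P q) l n (Xr M (r p) (r p.+1)) (Xr M (r q) (r q.+1)).
  by move=> r Hr HP; apply: Hav; exact: (W2C Hpq l0 Hr HP).
have szA : validA -> size VA < 2 * l.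
  move=> /andP [v1 v2]; apply: (confine (s:=prow P p) (t:=prow P q)) => // HP.
  have Hr := Rf_cut pq qk v1 v2.
  apply: (noPhi _ Hr).
  have [e1 e2 e3 e4] := Rf_vals k m a.+1 pq.
  rewrite e1 e2 e3 e4; apply: Phi_mono HP => // c Oc; apply: (Orow_sub _ Oc).
  by rewrite ltnSn andbT -ltnS.
have szB : validB -> size VB < 2 * l.
  move=> /and3P [v1 v2 v3]; apply: (confine (s:=prow P q) (t:=prow P p)) => // HP.
  have v2' : a - g + (q - p.+1) < m - (k - q.+1) by rewrite subnK.
  have Hr := Rf_cut pq qk v2 v2'.
  apply: (noPhi _ Hr).
  have [e1 e2 e3 e4] := Rf_vals k m (a - g) pq.
  rewrite e1 e2 e3 e4; apply: Phi_swap; apply: Phi_mono HP => // c Oc; apply: (Orow_sub _ Oc).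
  by rewrite subnK // leqnn.
have sizeL : size L <= 4 * l * l.
  rewrite /L size_cat.
  have hA : size (if validA then LA else [::]) <= 2 * l * l.
    case: ifP => // vA; rewrite size_allpairs size_iota /=.
    by rewrite leq_mul2r (szA vA) orbT.
  have hB : size (if validB then LB else [::]) <= 2 * l * l.
    case: ifP => // vB; rewrite size_allpairs size_iota /=.
    by rewrite leq_mul2r (szB vB) orbT.
  lia.
have memL : forall b : 'I_n, ~~ M a b -> rho O b \in L.
  move=> b Mb.
  have Ob : ~~ O b.
    apply/negP => /existsP [j /andP [/eqP jb Mj]].
    by move: Mb; rewrite (_ : b = j) ?Mj //; apply: val_inj.
  have [r [c [Hr [Hc Hcopy]]]] := Hcr a b (negbTE Mb).
  have PhiM' := C2W p q Hr Hc Hcopy.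
  have nP := noPhi r Hr.
  have rp : p <= r p := cut_ge Hr (ltnW (ltn_ord p)).
  have rpq : r p.+1 + g <= r q := cut_mono Hr pq (ltnW qk).
  have rqk : r q.+1 + h <= m.
    have := cut_mono Hr qk (leqnn k); case: Hr => [_ [-> _]] //.
  have [_ [_ Hinc]] := Hr.
  have rp1 := Hinc p (ltn_ord p).
  have rq1 := Hinc q qk.
  have bn : b < n := ltn_ord b.
  case: (boolP (r p <= a < r p.+1)) => HA.
    have vA : validA by rewrite /validA; apply/andP; split; lia.
    have PA : Phi (prow P p) (prow P q) l n (fun c => Xr M (r p) (r p.+1) c || (c == b))
                (Xr M (r q) (r q.+1)).
      apply: (Phi_mono _ _ PhiM').
        by move=> v /Xr_flip /orP [hh|/andP [_ hh]] /=; rewrite hh ?orbT.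
      move=> v /Xr_flip /orP [//|/andP [/andP [h1 h2] _]]; lia.
    have [beta Hbeta Hrb] := region On (fun c => Orow_sub (c:=c) HA) Ob bn PA nP.
    rewrite /L mem_cat vA; apply/orP; left.
    rewrite (_ : rho O b = beta + (rho O b - beta)); last by lia.
    apply: allpairs_f; last by rewrite mem_iota; lia.
    move/orP: Hbeta => [/eqP ->|/hasP [y]]; first by rewrite inE eqxx.
    rewrite mem_iota add0n => /andP [_ yn] /andP [Yy /eqP ->].
    rewrite inE mem_undup; apply/orP; right; apply: map_f.
    rewrite mem_filter mem_iota add0n yn andbT.
    rewrite leq0n andbT; by apply: (Xr_sub _ _ Yy); lia.
  case: (boolP (r q <= a < r q.+1)) => HB.
    have vB : validB by rewrite /validB; apply/and3P; split; lia.
    have PB : Phi (prow P q) (prow P p) l n (fun c => Xr M (r q) (r q.+1) c || (c == b))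
                (Xr M (r p) (r p.+1)).
      apply: Phi_swap; apply: (Phi_mono _ _ PhiM').
        move=> v /Xr_flip /orP [//|/andP [/andP [h1 h2] _]]; lia.
      by move=> v /Xr_flip /orP [hh|/andP [_ hh]] /=; rewrite hh ?orbT.
    have nPB : ~ Phi (prow P q) (prow P p) l n (Xr M (r q) (r q.+1)) (Xr M (r p) (r p.+1)).
      by move=> /Phi_swap.
    have [beta Hbeta Hrb] := region On (fun c => Orow_sub (c:=c) HB) Ob bn PB nPB.
    rewrite /L mem_cat vB; apply/orP; right.
    rewrite (_ : rho O b = beta + (rho O b - beta)); last by lia.
    apply: allpairs_f; last by rewrite mem_iota; lia.
    move/orP: Hbeta => [/eqP ->|/hasP [y]]; first by rewrite inE eqxx.
    rewrite mem_iota add0n => /andP [_ yn] /andP [Yy /eqP ->].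
    rewrite inE mem_undup; apply/orP; right; apply: map_f.
    rewrite mem_filter mem_iota add0n yn andbT.
    rewrite leq0n andbT; by apply: (Xr_sub _ _ Yy); lia.
  exfalso; apply: nP; apply: (Phi_mono _ _ PhiM').
    by move=> v /Xr_flip /orP [//|/andP [HA' _]]; move: HA; rewrite HA'.
  by move=> v /Xr_flip /orP [//|/andP [HB' _]]; move: HB; rewrite HB'.
rewrite /row_complexity cardE.
set Z := [set b : 'I_n | _].
have Zinj : forall b1 b2 : 'I_n, b1 \in Z -> b2 \in Z -> b1 < b2 -> rho O b1 < rho O b2.
  move=> b1 b2 _; rewrite inE => /andP [_ /forallP Hb2] b12.
  have b2p : 0 < b2 by apply: leq_ltn_trans b12.
  have b'n : b2.-1 < n by apply: leq_ltn_trans (leq_pred _) (ltn_ord b2).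
  have := Hb2 (Ordinal b'n); rewrite /= prednK // eqxx /= => Mb'.
  apply: (@rho_lt _ _ _ b2.-1); first by apply/andP; split; lia.
  by apply/existsP; exists (Ordinal b'n); rewrite eqxx Mb'.
rewrite -(size_map (fun b : 'I_n => rho O b)).
apply: leq_trans sizeL; apply: uniq_leq_size.
  rewrite map_inj_in_uniq ?enum_uniq // => b1 b2; rewrite !mem_enum => h1 h2 e.
  apply: val_inj; case: (ltngtP b1 b2) => // [lt|lt].
    by have := Zinj _ _ h1 h2 lt; rewrite e ltnn.
  by have := Zinj _ _ h2 h1 lt; rewrite e ltnn.
move=> v /mapP [b]; rewrite mem_enum inE => /andP [Mb _] ->.
exact: memL.
Qed.

Unset Implicit Arguments.

Theorem lemma3p14 (k l : nat) (P : 'M[bool]_(k, l)) :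
  #|[set i : 'I_k | nonempty_row P i]| = 2 -> row_bounding P.
Proof.
move=> H2.
have : #|[set i : 'I_k | nonempty_row P i]| == 2 by rewrite H2.
move=> /cards2P [x [y [xy E]]].
have memE : forall i, nonempty_row P i = (i == x) || (i == y).
  by move=> i; rewrite -in_set2 -E inE.
have ne : nonempty_row P x by rewrite memE eqxx.
have l0 : 0 < l by move: ne => /existsP [j _]; exact: (leq_ltn_trans (leq0n j) (ltn_ord j)).
have Hxy : forall (i : 'I_k) (j : 'I_l), P i j -> i = x \/ i = y.
  move=> i j Pij; have : nonempty_row P i by apply/existsP; exists j.
  by rewrite memE => /orP [/eqP ->|/eqP ->]; [left|right].
exists (4 * l * l) => m n M HM a.
case: (ltngtP x y) => [lt|lt|eq].
- exact: (core lt Hxy l0 HM).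
- apply: (core lt _ l0 HM) => i j /Hxy [->|->]; by [right|left].
- by move: xy; rewrite (val_inj eq) eqxx.
Qed.
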